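(* Let $g,\eta_p,\lambda>0$. Let $q_l,q_r$ be two states, $q=(h,hu,h\sigma_{xx},h\sigma_{zz})$ with $h>0$, $\sigma_{xx}>0$, $\sigma_{zz}>0$. Define $P_l=P(q_l)$, $P_r=P(q_r)$, $a_l=\sqrt{\partial_h P|_{\boldsymbol s}(h_l,\boldsymbol s_l)}$, $a_r=\sqrt{\partial_h P|_{\boldsymbol s}(h_r,\boldsymbol s_r)}$, and the relaxation speeds $$\frac{c_l}{h_l}=a_l+2\Big(\max(0,u_l-u_r)+\frac{\max(0,P_r-P_l)}{h_la_l+h_ra_r}\Big),\qquad \frac{c_r}{h_r}=a_r+2\Big(\max(0,u_l-u_r)+\frac{\max(0,P_l-P_r)}{h_la_l+h_ra_r}\Big).$$ With $\pi_l=P_l$, $\pi_r=P_r$, define the intermediate heights by $$\frac{1}{h_l^*}=\frac{1}{h_l}+\frac{c_r(u_r-u_l)+\pi_l-\pi_r}{c_l(c_l+c_r)},\qquad \frac{1}{h_r^*}=\frac{1}{h_r}+\frac{c_l(u_r-u_l)+\pi_r-\pi_l}{c_r(c_l+c_r)}.$$ Then $h_l^*$ and $h_r^*$ are well defined and positive (i.e. the right-hand sides above are positive), and $$\forall h\in[h_l,h_l^*]:\ h^2\,\partial_hP|_{\boldsymbol s}(h,\boldsymbol s_l)\le c_l^2,\qquad \forall h\in[h_r,h_r^*]:\ h^2\,\partial_hP|_{\boldsymbol s}(h,\boldsymbol s_r)\le c_r^2,$$ where $[a,b]$ denotes the closed interval between $a$ and $b$ whatever their order. Moreover, the finite volume scheme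 built on these speeds (described in the context) satisfies the discrete energy inequality: there is a numerical energy flux $\mathcal G(q_l,q_r)$ with $\mathcal G(q,q)=G(q)$ such that, under the CFL condition, $E(q_i^{n+1})-E(q_i^n)+\frac{\Delta t}{\Delta x_i}\big(\mathcal G(q_i^n,q_{i+1}^n)-\mathcal G(q_{i-1}^n,q_i^n)\big)\le 0$ for all $i$.
   Context: We consider the one-dimensional system (shallow viscoelastic flow without source terms) for $h\ge0$, velocity $u$, and $\sigma_{xx},\sigma_{zz}>0$: $\partial_t h+\partial_x(hu)=0$, $\partial_t(hu)+\partial_x(hu^2+P)=0$, $\partial_t(h\sigma_{xx})+\partial_x(h\sigma_{xx}u)-2h\sigma_{xx}\partial_xu=0$, $\partial_t(h\sigma_{zz})+\partial_x(h\sigma_{zz}u)+2h\sigma_{zz}\partial_xu=0$, with pressure $P=g\frac{h^2}{2}+\frac{\eta_p}{2\lambda}h(\sigma_{zz}-\sigma_{xx})$, constants $g,\eta_p,\lambda>0$. The (pseudo-conservative) state is $q=(h,hu,h\sigma_{xx},h\sigma_{zz})$. Set $\boldsymbol s=(s_{xx},s_{zz})=(\sigma_{xx}^{-1/2}/h,\ \sigma_{zz}^{1/2}/h)$; viewing $P$ as a function of $(h,\boldsymbol s)$, $P=g h^2/2+\frac{\eta_p}{2\lambda}(h^3s_{zz}^2-\frac{1}{hs_{xx}^2})$, and $\partial_hP|_{\boldsymbol s}=gh+\frac{\eta_p}{2\lambda}(3\sigma_{zz}+\sigma_{xx})$. Energy: $E(q)=h\frac{u^2}{2}+g\frac{h^2}{2}+\frac{\eta_p}{4\lambda}h(\sigma_{xx}+\sigma_{zz}-\ln(\sigma_{xx}\sigma_{zz})-2)$,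 energy flux $G(q)=(E+P)u$. Riemann solver: given $q_l,q_r$ and $c_l,c_r,h_l^*,h_r^*$ as in the claim, set $u^*=\frac{c_lu_l+c_ru_r+\pi_l-\pi_r}{c_l+c_r}$, $\pi^*=\frac{c_r\pi_l+c_l\pi_r-c_lc_r(u_r-u_l)}{c_l+c_r}$, $\sigma_{xx,l}^*=\sigma_{xx,l}(h_l/h_l^* )^2$, $\sigma_{xx,r}^*=\sigma_{xx,r}(h_r/h_r^* )^2$, $\sigma_{zz,l}^*=\sigma_{zz,l}(h_l^*/h_l)^2$, $\sigma_{zz,r}^*=\sigma_{zz,r}(h_r^*/h_r)^2$, $q_l^*=(h_l^*,h_l^*u^*,h_l^*\sigma_{xx,l}^*,h_l^*\sigma_{zz,l}^* )$, $q_r^*$ similarly, and speeds $\Sigma_1=u_l-c_l/h_l$, $\Sigma_2=u^*$, $\Sigma_3=u_r+c_r/h_r$. The self-similar approximate solution $R(\xi)$ equals $q_l$ (with $\pi=\pi_l$) for $\xi<\Sigma_1$, $q_l^*$ (with $\pi=\pi^*$) on $(\Sigma_1,\Sigma_2)$, $q_r^*$ (with $\pi=\pi^*$) on $(\Sigma_2,\Sigma_3)$, $q_r$ (with $\pi=\pi_r$) for $\xi>\Sigma_3$. Numerical fluxes: $\mathcal F_l=(\mathcal F^h,\mathcal F^{hu},\mathcal F_l^{h\sigma_{xx}},\mathcal F_l^{h\sigma_{zz}})$, $\mathcal F_r=(\mathcal F^h,\mathcal F^{hu},\mathcal F_r^{h\sigma_{xx}},\mathcal F_r^{h\sigma_{zz}})$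 where $\mathcal F^h=(hu)$ and $\mathcal F^{hu}=(hu^2+\pi)$ evaluated in $R$ at $\xi=0$, and, writing $w=h\sigma_{xx}$ (resp. $h\sigma_{zz}$), $\mathcal F_l^{w}=(wu)_l+\min(0,\Sigma_1)(w_l^*-w_l)+\min(0,\Sigma_2)(w_r^*-w_l^* )+\min(0,\Sigma_3)(w_r-w_r^* )$, $\mathcal F_r^{w}=(wu)_r-\max(0,\Sigma_1)(w_l^*-w_l)-\max(0,\Sigma_2)(w_r^*-w_l^* )-\max(0,\Sigma_3)(w_r-w_r^* )$. Scheme: cells $(x_{i-1/2},x_{i+1/2})$, $\Delta x_i=x_{i+1/2}-x_{i-1/2}$, time step $\Delta t$, $q_i^{n+1}=q_i^n-\frac{\Delta t}{\Delta x_i}(\mathcal F_l(q_i^n,q_{i+1}^n)-\mathcal F_r(q_{i-1}^n,q_i^n))$. CFL condition: $\Delta t\,A(q_i^n,q_{i+1}^n)\le\frac12\min(\Delta x_i,\Delta x_{i+1})$ for all $i$, with $A(q_l,q_r)=\max(|\Sigma_1|,|\Sigma_2|,|\Sigma_3|)$. *)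

(* Defs.v *)
From Stdlib Require Import Reals ZArith.
Open Scope R_scope.

Record state : Type := St {
  st_h : R;
  st_hu : R;
  st_hsxx : R;
  st_hszz : R
}.

Definition vel (q : state) : R := st_hu q / st_h q.
Definition sigxx (q : state) : R := st_hsxx q / st_h q.
Definition sigzz (q : state) : R := st_hszz q / st_h q.

Definition admissible (q : state) : Prop :=
  0 < st_h q /\ 0 < sigxx q /\ 0 < sigzz q.

Definition pressure (g eta lam : R) (q : state) : R :=
  g * st_h q ^ 2 / 2 + eta / (2 * lam) * (st_h q * (sigzz q - sigxx q)).

Definition s_xx (q : state) : R := / (sqrt (sigxx q) * st_h q).
Definition s_zz (q : state) : R := sqrt (sigzz q) / st_h q.

(** P as a function of (h, s) and its partial derivative in h at fixed s:
    P = g h^2/2 + eta_p/(2 lambda) (h^3 s_zz^2 - 1/(h s_xx^2)),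
    d_h P|_s = g h + eta_p/(2 lambda) (3 h^2 s_zz^2 + 1/(h^2 s_xx^2))
             = g h + eta_p/(2 lambda) (3 sigma_zz + sigma_xx). *)
Definition P_hs (g eta lam h sx sz : R) : R :=
  g * h ^ 2 / 2 + eta / (2 * lam) * (h ^ 3 * sz ^ 2 - / (h * sx ^ 2)).
Definition dPdh_s (g eta lam h sx sz : R) : R :=
  g * h + eta / (2 * lam) * (3 * h ^ 2 * sz ^ 2 + / (h ^ 2 * sx ^ 2)).

Definition sound (g eta lam : R) (q : state) : R :=
  sqrt (dPdh_s g eta lam (st_h q) (s_xx q) (s_zz q)).

Definition c_l (g eta lam : R) (ql qr : state) : R :=
  let al := sound g eta lam ql in let ar := sound g eta lam qr in
  let Pl := pressure g eta lam ql in let Pr := pressure g eta lam qr in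
  st_h ql * (al + 2 * (Rmax 0 (vel ql - vel qr)
                       + Rmax 0 (Pr - Pl) / (st_h ql * al + st_h qr * ar))).
Definition c_r (g eta lam : R) (ql qr : state) : R :=
  let al := sound g eta lam ql in let ar := sound g eta lam qr in
  let Pl := pressure g eta lam ql in let Pr := pressure g eta lam qr in
  st_h qr * (ar + 2 * (Rmax 0 (vel ql - vel qr)
                       + Rmax 0 (Pl - Pr) / (st_h ql * al + st_h qr * ar))).

Definition inv_hl_star (g eta lam : R) (ql qr : state) : R :=
  let cl := c_l g eta lam ql qr in let cr := c_r g eta lam ql qr in
  / st_h ql + (cr * (vel qr - vel ql) + pressure g eta lam ql - pressure g eta lam qr)
              / (cl * (cl + cr)).
Definition inv_hr_star (g eta lam : R) (ql qr : state) : R :=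
  let cl := c_l g eta lam ql qr in let cr := c_r g eta lam ql qr in
  / st_h qr + (cl * (vel qr - vel ql) + pressure g eta lam qr - pressure g eta lam ql)
              / (cr * (cl + cr)).
Definition hl_star (g eta lam : R) (ql qr : state) : R := / inv_hl_star g eta lam ql qr.
Definition hr_star (g eta lam : R) (ql qr : state) : R := / inv_hr_star g eta lam ql qr.

Definition u_star (g eta lam : R) (ql qr : state) : R :=
  let cl := c_l g eta lam ql qr in let cr := c_r g eta lam ql qr in
  (cl * vel ql + cr * vel qr + pressure g eta lam ql - pressure g eta lam qr) / (cl + cr).
Definition pi_star (g eta lam : R) (ql qr : state) : R :=
  let cl := c_l g eta lam ql qr in let cr := c_r g eta lam ql qr in
  (cr * pressure g eta lam ql + cl * pressure g eta lam qr
   - cl * cr * (vel qr - vel ql)) / (cl + cr).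

Definition ql_star (g eta lam : R) (ql qr : state) : state :=
  let hs := hl_star g eta lam ql qr in
  let sx := sigxx ql * (st_h ql / hs) ^ 2 in
  let sz := sigzz ql * (hs / st_h ql) ^ 2 in
  St hs (hs * u_star g eta lam ql qr) (hs * sx) (hs * sz).
Definition qr_star (g eta lam : R) (ql qr : state) : state :=
  let hs := hr_star g eta lam ql qr in
  let sx := sigxx qr * (st_h qr / hs) ^ 2 in
  let sz := sigzz qr * (hs / st_h qr) ^ 2 in
  St hs (hs * u_star g eta lam ql qr) (hs * sx) (hs * sz).

Definition Sig1 (g eta lam : R) (ql qr : state) : R := vel ql - c_l g eta lam ql qr / st_h ql.
Definition Sig2 (g eta lam : R) (ql qr : state) : R := u_star g eta lam ql qr.
Definition Sig3 (g eta lam : R) (ql qr : state) : R := vel qr + c_r g eta lam ql qr / st_h qr.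

(** Self-similar approximate Riemann solution R(xi), paired with the value of pi.
    At a wave xi = Sigma_k we take the state on the right of the wave. *)
Definition riemann (g eta lam : R) (ql qr : state) (xi : R) : state * R :=
  if Rlt_dec xi (Sig1 g eta lam ql qr) then (ql, pressure g eta lam ql)
  else if Rlt_dec xi (Sig2 g eta lam ql qr) then (ql_star g eta lam ql qr, pi_star g eta lam ql qr)
  else if Rlt_dec xi (Sig3 g eta lam ql qr) then (qr_star g eta lam ql qr, pi_star g eta lam ql qr)
  else (qr, pressure g eta lam qr).

Definition flux_h (g eta lam : R) (ql qr : state) : R :=
  st_hu (fst (riemann g eta lam ql qr 0)).
Definition flux_hu (g eta lam : R) (ql qr : state) : R :=
  let p := riemann g eta lam ql qr 0 in
  st_hu (fst p) * vel (fst p) + snd p.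

Definition flux_w_l (g eta lam : R) (w : state -> R) (ql qr : state) : R :=
  let qls := ql_star g eta lam ql qr in let qrs := qr_star g eta lam ql qr in
  w ql * vel ql
  + Rmin 0 (Sig1 g eta lam ql qr) * (w qls - w ql)
  + Rmin 0 (Sig2 g eta lam ql qr) * (w qrs - w qls)
  + Rmin 0 (Sig3 g eta lam ql qr) * (w qr - w qrs).
Definition flux_w_r (g eta lam : R) (w : state -> R) (ql qr : state) : R :=
  let qls := ql_star g eta lam ql qr in let qrs := qr_star g eta lam ql qr in
  w qr * vel qr
  - Rmax 0 (Sig1 g eta lam ql qr) * (w qls - w ql)
  - Rmax 0 (Sig2 g eta lam ql qr) * (w qrs - w qls)
  - Rmax 0 (Sig3 g eta lam ql qr) * (w qr - w qrs).

Definition flux_l (g eta lam : R) (ql qr : state) : state :=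
  St (flux_h g eta lam ql qr) (flux_hu g eta lam ql qr)
     (flux_w_l g eta lam st_hsxx ql qr) (flux_w_l g eta lam st_hszz ql qr).
Definition flux_r (g eta lam : R) (ql qr : state) : state :=
  St (flux_h g eta lam ql qr) (flux_hu g eta lam ql qr)
     (flux_w_r g eta lam st_hsxx ql qr) (flux_w_r g eta lam st_hszz ql qr).

Definition scheme_step (g eta lam dt dxi : R) (qm q qp : state) : state :=
  let Fl := flux_l g eta lam q qp in let Fr := flux_r g eta lam qm q in
  St (st_h q - dt / dxi * (st_h Fl - st_h Fr))
     (st_hu q - dt / dxi * (st_hu Fl - st_hu Fr))
     (st_hsxx q - dt / dxi * (st_hsxx Fl - st_hsxx Fr))
     (st_hszz q - dt / dxi * (st_hszz Fl - st_hszz Fr)).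

Definition max_speed (g eta lam : R) (ql qr : state) : R :=
  Rmax (Rabs (Sig1 g eta lam ql qr)) (Rmax (Rabs (Sig2 g eta lam ql qr)) (Rabs (Sig3 g eta lam ql qr))).

Definition energy (g eta lam : R) (q : state) : R :=
  st_h q * vel q ^ 2 / 2 + g * st_h q ^ 2 / 2
  + eta / (4 * lam) * (st_h q * (sigxx q + sigzz q - ln (sigxx q * sigzz q) - 2)).
Definition energy_flux (g eta lam : R) (q : state) : R :=
  (energy g eta lam q + pressure g eta lam q) * vel q.

(* Main.v *)
Require Import Defs.
From Stdlib Require Import Reals ZArith.
From Stdlib Require Import Lra Psatz List.
Import ListNotations.
Open Scope R_scope.


Lemma left_core (g k hl xl zl hr al ar m p1 p2 ul ur Pl Pr cl cr : R) :
 0<g -> 0<k -> 0<hl -> 0<xl -> 0<zl -> 0<hr -> 0<al -> 0<ar ->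
 al^2 = g*hl + k*(3*zl + xl) -> 0<=m -> ul - ur <= m -> 0 <= p1 -> Pr - Pl <= p1 -> 0 <= p2 ->
 cl = hl*(al + 2*(m + p1/(hl*al+hr*ar))) -> cr = hr*(ar + 2*(m + p2/(hl*al+hr*ar))) ->
 0 < /hl + (cr*(ur-ul) + Pl - Pr)/(cl*(cl+cr)) /\
 forall y, Rmin hl (/(/hl + (cr*(ur-ul) + Pl - Pr)/(cl*(cl+cr)))) <= y <=
           Rmax hl (/(/hl + (cr*(ur-ul) + Pl - Pr)/(cl*(cl+cr)))) ->
   g*y^3 + k*(3*zl*y^4/hl^2 + xl*hl^2) <= cl^2.
Proof.
intros Hg Hk Hhl Hxl Hzl Hhr Hal Har Hal2 Hm Hm2 Hp1 Hp12 Hp2 Hcl Hcr.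
assert (Hha : 0 < hl*al) by (apply Rmult_lt_0_compat; lra).
assert (Hhb : 0 < hr*ar) by (apply Rmult_lt_0_compat; lra).
set (D := hl*al+hr*ar) in *.
assert (HD : 0 < D) by (unfold D; nra).
set (t1 := p1/D) in *. set (t2 := p2/D) in *.
assert (Ht1 : 0 <= t1) by (unfold t1; unfold Rdiv; apply Rmult_le_pos; [lra | left; apply Rinv_0_lt_compat; lra]).
assert (Ht2 : 0 <= t2) by (unfold t2; unfold Rdiv; apply Rmult_le_pos; [lra | left; apply Rinv_0_lt_compat; lra]).
assert (Hp1e : p1 = t1 * D) by (unfold t1; field; lra).
set (b := al + 2*(m+t1)) in *.
assert (Hb : al <= b) by (unfold b; lra).
assert (Hclhl : cl = hl * b) by exact Hcl.
assert (Hcl0 : hl*al <= cl) by (rewrite Hclhl; nra).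
assert (Hcr0 : hr*ar <= cr) by (rewrite Hcr; nra).
assert (HS : D <= cl + cr) by (unfold D; lra).
set (N := cr*(ur-ul) + Pl - Pr).
assert (cr*(ul-ur) <= cr*m) by (apply Rmult_le_compat_l; nra).
assert (HN : - (cr*m + t1*D) <= N) by (unfold N; nra).
set (Q := b*(cl+cr) + N).
assert (HQ : (b+al)/2*(cl+cr) <= Q).
{ unfold Q. assert (cr*m <= (cl+cr)*m) by (apply Rmult_le_compat_r; lra). assert (t1*D <= t1*(cl+cr)) by (apply Rmult_le_compat_l; lra).
  assert (b*(cl+cr) = al*(cl+cr) + 2*(m*(cl+cr)) + 2*(t1*(cl+cr))) by (unfold b; ring).
  assert ((b+al)/2*(cl+cr) = al*(cl+cr) + m*(cl+cr) + t1*(cl+cr)) by (unfold b; field).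
  lra. }
assert (Hil : /hl + N/(cl*(cl+cr)) = Q/(hl*b*(cl+cr))).
{ unfold Q. rewrite Hclhl. field. rewrite <- Hclhl. repeat split; lra. }
fold N. rewrite Hil.
assert (HQ0 : 0 < Q) by nra.
assert (Hpos : 0 < Q/(hl*b*(cl+cr))).
{ apply Rdiv_lt_0_compat; [lra|]. apply Rmult_lt_0_compat; [nra|lra]. }
split; [exact Hpos|].
intros y [Hy1 Hy2].
assert (Hinv : /(Q/(hl*b*(cl+cr))) = hl*b*(cl+cr)/Q) by (field; split; try lra; split; try lra; nra).
rewrite Hinv in Hy1, Hy2.
assert (Hy0 : 0 < y).
{ eapply Rlt_le_trans; [|exact Hy1]. unfold Rmin; destruct Rle_dec; [lra|].
  apply Rdiv_lt_0_compat; [|lra]. apply Rmult_lt_0_compat; [nra|lra]. }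
assert (Hcl2 : hl^2*al^2 <= cl^2) by nra.
destruct (Rle_dec y hl) as [Hyl|Hyl].
- assert (y^3 <= hl^3) by (apply pow_incr; lra).
  assert (y^4 <= hl^4) by (apply pow_incr; lra).
  assert (3*zl*y^4/hl^2 <= 3*zl*hl^4/hl^2).
  { unfold Rdiv. apply Rmult_le_compat_r. left; apply Rinv_0_lt_compat; nra. nra. }
  assert (E : g*hl^3 + k*(3*zl*hl^4/hl^2 + xl*hl^2) = hl^2*al^2) by (rewrite Hal2; field; lra).
  nra.
- assert (Hy3 : y <= hl*b*(cl+cr)/Q).
  { unfold Rmax in Hy2; destruct Rle_dec; lra. }
  assert (Hy4 : y*(b+al) <= 2*hl*b).
  { assert (y*Q <= hl*b*(cl+cr)).
    { apply (Rmult_le_compat_r Q) in Hy3; [|lra]. replace (hl*b*(cl+cr)/Q*Q) with (hl*b*(cl+cr)) in Hy3 by (field; lra). lra. }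
    assert (y*((b+al)/2*(cl+cr)) <= hl*b*(cl+cr)) by nra.
    nra. }
  assert (Hy5 : al*y^2 <= b*hl^2).
  { assert (y^2*(b+al)^2 <= 4*hl^2*b^2).
    { replace (y^2*(b+al)^2) with ((y*(b+al))^2) by ring. replace (4*hl^2*b^2) with ((2*hl*b)^2) by ring.
      apply pow_incr. split; [|lra]. apply Rmult_le_pos; lra. }
    assert (4*al*b <= (b+al)^2) by nra.
    assert (al*y^2*(b+al)^2 <= b*hl^2*(b+al)^2).
    { replace (al*y^2*(b+al)^2) with (al*(y^2*(b+al)^2)) by ring.
      apply Rle_trans with (al*(4*hl^2*b^2)). apply Rmult_le_compat_l; lra.
      replace (al*(4*hl^2*b^2)) with ((4*al*b)*(hl^2*b)) by ring.
      replace (b*hl^2*(b+al)^2) with ((b+al)^2*(hl^2*b)) by ring.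
      apply Rmult_le_compat_r; [|lra]. apply Rmult_le_pos; nra. }
    assert (0 < (b+al)^2) by nra. nra. }
  assert (Hy6 : g*y^3 + k*(3*zl*y^4/hl^2 + xl*hl^2) <= (al*y^2)^2/hl^2).
  { assert (E : (al*y^2)^2/hl^2 = g*(y^4/hl) + k*(3*zl*y^4/hl^2 + xl*(y^4/hl^2))).
    { replace ((al*y^2)^2) with (al^2*y^4) by ring. rewrite Hal2. field. lra. }
    rewrite E.
    assert (y^3 <= y^4/hl).
    { apply (Rmult_le_reg_r hl); [lra|]. replace (y^4/hl*hl) with (y^4) by (field; lra). nra. }
    assert (hl^2 <= y^4/hl^2).
    { apply (Rmult_le_reg_r (hl^2)); [nra|]. replace (y^4/hl^2*hl^2) with (y^4) by (field; lra).
      assert (hl^2 <= y^2) by nra. nra. }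
    assert (g*y^3 <= g*(y^4/hl)) by (apply Rmult_le_compat_l; lra).
    assert (xl*hl^2 <= xl*(y^4/hl^2)) by (apply Rmult_le_compat_l; lra).
    assert (k*(xl*hl^2) <= k*(xl*(y^4/hl^2))) by (apply Rmult_le_compat_l; lra).
    lra. }
  assert ((al*y^2)^2/hl^2 <= cl^2).
  { rewrite Hclhl. apply (Rmult_le_reg_r (hl^2)); [nra|].
    replace ((al*y^2)^2/hl^2*hl^2) with ((al*y^2)^2) by (field; lra).
    assert (0 <= al*y^2) by nra. nra. }
  lra.
Qed.

Lemma adm_split q : admissible q ->
  st_hu q = st_h q * vel q /\ st_hsxx q = st_h q * sigxx q /\ st_hszz q = st_h q * sigzz q.
Proof. intros [H _]. unfold vel, sigxx, sigzz. repeat split; field; lra. Qed.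

Lemma dP_eq g eta lam q y : admissible q -> y <> 0 ->
  dPdh_s g eta lam y (s_xx q) (s_zz q) =
  g*y + eta/(2*lam)*(3*y^2*(sigzz q/st_h q^2) + sigxx q * st_h q^2/y^2).
Proof.
intros [Hh [Hx Hz]] Hy. unfold dPdh_s, s_xx, s_zz.
assert (Sx : sqrt (sigxx q) * sqrt (sigxx q) = sigxx q) by (apply sqrt_sqrt; lra).
assert (Sz : sqrt (sigzz q) * sqrt (sigzz q) = sigzz q) by (apply sqrt_sqrt; lra).
assert (Px : 0 < sqrt (sigxx q)) by (apply sqrt_lt_R0; lra).
replace ((sqrt (sigzz q) / st_h q)^2) with (sqrt (sigzz q) * sqrt (sigzz q) / st_h q^2) by (field; lra).
replace (/ (y^2 * (/ (sqrt (sigxx q) * st_h q))^2)) with (sqrt (sigxx q) * sqrt (sigxx q) * st_h q^2 / y^2)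
  by (field; repeat split; lra).
rewrite Sx, Sz. reflexivity.
Qed.

Lemma H_eq g eta lam q y : lam <> 0 -> admissible q -> y <> 0 ->
  y^2 * dPdh_s g eta lam y (s_xx q) (s_zz q) =
  g*y^3 + eta/(2*lam)*(3*sigzz q*y^4/st_h q^2 + sigxx q*st_h q^2).
Proof.
intros Hl Hq Hy. rewrite dP_eq by assumption. destruct Hq as [Hh _]. field. repeat split; auto; lra.
Qed.

Lemma sound_eq g eta lam q : lam <> 0 -> admissible q ->
  sound g eta lam q = sqrt (g*st_h q + eta/(2*lam)*(3*sigzz q + sigxx q)).
Proof.
intros Hl Hq. unfold sound. rewrite dP_eq; [|exact Hq|destruct Hq; lra]. f_equal.
destruct Hq as [Hh _]. field. repeat split; auto; lra.
Qed.

Lemma sound_pos g eta lam q : 0 < g -> 0 < eta -> 0 < lam -> admissible q ->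
  0 < sound g eta lam q /\ sound g eta lam q ^ 2 = g*st_h q + eta/(2*lam)*(3*sigzz q + sigxx q).
Proof.
intros Hg He Hl Hq. rewrite sound_eq by (auto; lra).
destruct Hq as [Hh [Hx Hz]].
assert (0 < eta/(2*lam)) by (unfold Rdiv; apply Rmult_lt_0_compat; [lra| apply Rinv_0_lt_compat; lra]).
assert (0 < g*st_h q + eta/(2*lam)*(3*sigzz q + sigxx q)) by nra.
split. apply sqrt_lt_R0; lra. rewrite <- Rsqr_pow2. apply Rsqr_sqrt. lra.
Qed.

Lemma Rmax0 a : 0 <= Rmax 0 a /\ a <= Rmax 0 a.
Proof. split; [apply Rmax_l | apply Rmax_r]. Qed.

Lemma cl_pos g eta lam ql qr : 0 < g -> 0 < eta -> 0 < lam -> admissible ql -> admissible qr ->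
  st_h ql * sound g eta lam ql <= c_l g eta lam ql qr /\ st_h qr * sound g eta lam qr <= c_r g eta lam ql qr.
Proof.
intros Hg He Hl Hql Hqr.
destruct (sound_pos g eta lam ql Hg He Hl Hql) as [Hal _].
destruct (sound_pos g eta lam qr Hg He Hl Hqr) as [Har _].
destruct Hql as [Hhl _]; destruct Hqr as [Hhr _].
assert (HD : 0 < st_h ql * sound g eta lam ql + st_h qr * sound g eta lam qr) by nra.
destruct (Rmax0 (vel ql - vel qr)). destruct (Rmax0 (pressure g eta lam qr - pressure g eta lam ql)).
destruct (Rmax0 (pressure g eta lam ql - pressure g eta lam qr)).
assert (forall p, 0 <= p -> 0 <= p / (st_h ql * sound g eta lam ql + st_h qr * sound g eta lam qr)).
{ intros p Hp. unfold Rdiv; apply Rmult_le_pos; [lra | left; apply Rinv_0_lt_compat; lra]. }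
unfold c_l, c_r; cbv zeta. split.
- specialize (H5 _ H1). nra.
- specialize (H5 _ H3). nra.
Qed.

Lemma part1_pair g eta lam ql qr : 0 < g -> 0 < eta -> 0 < lam -> admissible ql -> admissible qr ->
     0 < inv_hl_star g eta lam ql qr /\ 0 < inv_hr_star g eta lam ql qr /\
     (forall h, Rmin (st_h ql) (hl_star g eta lam ql qr) <= h <=
                Rmax (st_h ql) (hl_star g eta lam ql qr) ->
        h ^ 2 * dPdh_s g eta lam h (s_xx ql) (s_zz ql) <= c_l g eta lam ql qr ^ 2) /\
     (forall h, Rmin (st_h qr) (hr_star g eta lam ql qr) <= h <=
                Rmax (st_h qr) (hr_star g eta lam ql qr) ->
        h ^ 2 * dPdh_s g eta lam h (s_xx qr) (s_zz qr) <= c_r g eta lam ql qr ^ 2).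
Proof.
intros Hg He Hl Hql Hqr.
assert (Hk : 0 < eta/(2*lam)) by (unfold Rdiv; apply Rmult_lt_0_compat; [lra| apply Rinv_0_lt_compat; lra]).
destruct (sound_pos g eta lam ql Hg He Hl Hql) as [Hal Hal2].
destruct (sound_pos g eta lam qr Hg He Hl Hqr) as [Har Har2].
pose proof Hql as [Hhl [Hxl Hzl]]. pose proof Hqr as [Hhr [Hxr Hzr]].
destruct (Rmax0 (vel ql - vel qr)) as [Hm1 Hm2].
destruct (Rmax0 (pressure g eta lam qr - pressure g eta lam ql)) as [Hp1 Hp12].
destruct (Rmax0 (pressure g eta lam ql - pressure g eta lam qr)) as [Hp2 Hp22].
destruct (left_core g (eta/(2*lam)) (st_h ql) (sigxx ql) (sigzz ql) (st_h qr)
   (sound g eta lam ql) (sound g eta lam qr) (Rmax 0 (vel ql - vel qr))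
   (Rmax 0 (pressure g eta lam qr - pressure g eta lam ql))
   (Rmax 0 (pressure g eta lam ql - pressure g eta lam qr))
   (vel ql) (vel qr) (pressure g eta lam ql) (pressure g eta lam qr)
   (c_l g eta lam ql qr) (c_r g eta lam ql qr)) as [A1 A2]; try assumption; try reflexivity.
destruct (left_core g (eta/(2*lam)) (st_h qr) (sigxx qr) (sigzz qr) (st_h ql)
   (sound g eta lam qr) (sound g eta lam ql) (Rmax 0 (vel ql - vel qr))
   (Rmax 0 (pressure g eta lam ql - pressure g eta lam qr))
   (Rmax 0 (pressure g eta lam qr - pressure g eta lam ql))
   (- vel qr) (- vel ql) (pressure g eta lam qr) (pressure g eta lam ql)
   (c_r g eta lam ql qr) (c_l g eta lam ql qr)) as [B1 B2]; try assumption; try lra.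
{ unfold c_r; cbv zeta. replace (st_h qr * sound g eta lam qr + st_h ql * sound g eta lam ql) with (st_h ql * sound g eta lam ql + st_h qr * sound g eta lam qr) by ring; reflexivity. }
{ unfold c_l; cbv zeta. replace (st_h qr * sound g eta lam qr + st_h ql * sound g eta lam ql) with (st_h ql * sound g eta lam ql + st_h qr * sound g eta lam qr) by ring; reflexivity. }
assert (Eir : inv_hr_star g eta lam ql qr =
   / st_h qr + (c_l g eta lam ql qr * (- vel ql - - vel qr) + pressure g eta lam qr - pressure g eta lam ql) /
     (c_r g eta lam ql qr * (c_r g eta lam ql qr + c_l g eta lam ql qr))).
{ unfold inv_hr_star; cbv zeta. f_equal. f_equal; ring. }
assert (Eil : inv_hl_star g eta lam ql qr =
   / st_h ql + (c_r g eta lam ql qr * (vel qr - vel ql) + pressure g eta lam ql - pressure g eta lam qr) /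
     (c_l g eta lam ql qr * (c_l g eta lam ql qr + c_r g eta lam ql qr))) by reflexivity.
unfold hl_star, hr_star. rewrite Eil, Eir.
split; [exact A1|]. split; [exact B1|]. split.
- intros y Hy. assert (0 < y).
  { destruct Hy as [Hy _]. eapply Rlt_le_trans; [|exact Hy]. unfold Rmin; destruct Rle_dec; [lra|].
    apply Rinv_0_lt_compat; exact A1. }
  rewrite H_eq by (auto; lra). apply A2. exact Hy.
- intros y Hy. assert (0 < y).
  { destruct Hy as [Hy _]. eapply Rlt_le_trans; [|exact Hy]. unfold Rmin; destruct Rle_dec; [lra|].
    apply Rinv_0_lt_compat; exact B1. }
  rewrite H_eq by (auto; lra). apply B2. exact Hy.
Qed.

Definition Ef g eta lam h u x z := h * u ^ 2 / 2 + g * h ^ 2 / 2 + eta / (4 * lam) * (h * (x + z - ln (x * z) - 2)).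
Definition Pf g eta lam h x z := g * h ^ 2 / 2 + eta / (2 * lam) * (h * (z - x)).

Lemma wave_energy g eta lam h h' u u' c x z P pi' S : lam<>0 -> 0<h -> 0<h' -> 0<x -> 0<z ->
 u' = u + c*(/h' - /h) -> P = Pf g eta lam h x z -> pi' = P - c*(u'-u) -> S = u - c/h ->
 (Ef g eta lam h' u' (x*(h/h')^2) (z*(h'/h)^2) + pi')*u' - (Ef g eta lam h u x z + P)*u
   - S*(Ef g eta lam h' u' (x*(h/h')^2) (z*(h'/h)^2) - Ef g eta lam h u x z)
 = c*(h'-h)^2/(2*h^2*h'^2) * (g*h^2*h' + eta/(2*lam)*x*h^2 + eta/(2*lam)*z*(h'+2*h)*h' - c^2).
Proof.
intros Hl Hh Hh' Hx Hz Hu HP Hpi HS. subst. unfold Ef, Pf.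
replace (ln (x*(h/h')^2 * (z*(h'/h)^2))) with (ln (x*z)) by (f_equal; field; lra).
field. repeat split; auto; lra.
Qed.

Lemma wave_RH h h' u u' c P pi' S : 0<h -> 0<h' ->
 u' = u + c*(/h' - /h) -> pi' = P - c*(u'-u) -> S = u - c/h ->
 h'*u' - h*u = S*(h'-h) /\ (h'*u'*u' + pi') - (h*u*u + P) = S*(h'*u' - h*u).
Proof.
intros Hh Hh' Hu Hpi HS. subst. split; field; lra.
Qed.

Lemma bracket_le g k h h' x z c : 0<g -> 0<k -> 0<h -> 0<h' -> 0<x -> 0<z ->
  g*h^3 + k*(3*z*h^4/h^2 + x*h^2) <= c^2 -> g*h'^3 + k*(3*z*h'^4/h^2 + x*h^2) <= c^2 ->
  g*h^2*h' + k*x*h^2 + k*z*(h'+2*h)*h' <= c^2.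
Proof.
intros Hg Hk Hh Hh' Hx Hz H1 H2.
replace (3*z*h^4/h^2) with (3*z*h^2) in H1 by (field; lra).
assert (E : 3*z*h'^4/h^2 = 3*z*h'^4/h^2) by reflexivity.
destruct (Rle_dec h h') as [Hle|Hle].
- assert (g*h^2*h' <= g*h'^3).
  { replace (g*h'^3) with (g*h'^2*h') by ring. apply Rmult_le_compat_r; [lra|]. apply Rmult_le_compat_l; [lra|]. apply pow_incr; lra. }
  assert ((h'+2*h)*h' <= 3*h'^4/h^2).
  { apply (Rmult_le_reg_r (h^2)); [nra|]. replace (3*h'^4/h^2*h^2) with (3*h'^4) by (field; lra).
    assert (h^2 <= h'^2) by (apply pow_incr; lra).
    assert (h*h' <= h'^2) by nra.
    assert (h' * h^2 <= h'^3) by nra.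
    assert (h'^2*h^2 <= h'^4) by nra.
    nra. }
  assert (k*z*(h'+2*h)*h' <= k*(3*z*h'^4/h^2)).
  { replace (k*z*(h'+2*h)*h') with ((k*z)*((h'+2*h)*h')) by ring.
    replace (k*(3*z*h'^4/h^2)) with ((k*z)*(3*h'^4/h^2)) by (field; lra).
    apply Rmult_le_compat_l; [nra|lra]. }
  nra.
- assert (g*h^2*h' <= g*h^3).
  { replace (g*h^3) with (g*h^2*h) by ring. apply Rmult_le_compat_l; [nra|lra]. }
  assert (k*z*(h'+2*h)*h' <= k*(3*z*h^2)).
  { replace (k*z*(h'+2*h)*h') with ((k*z)*((h'+2*h)*h')) by ring.
    replace (k*(3*z*h^2)) with ((k*z)*(3*h^2)) by ring.
    apply Rmult_le_compat_l; [nra|nra]. }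
  nra.
Qed.

Definition Lsum g eta lam (X : state -> R) a b :=
  Rmin 0 (Sig1 g eta lam a b) * (X (ql_star g eta lam a b) - X a)
  + Rmin 0 (Sig2 g eta lam a b) * (X (qr_star g eta lam a b) - X (ql_star g eta lam a b))
  + Rmin 0 (Sig3 g eta lam a b) * (X b - X (qr_star g eta lam a b)).
Definition Rsum g eta lam (X : state -> R) a b :=
  Rmax 0 (Sig1 g eta lam a b) * (X (ql_star g eta lam a b) - X a)
  + Rmax 0 (Sig2 g eta lam a b) * (X (qr_star g eta lam a b) - X (ql_star g eta lam a b))
  + Rmax 0 (Sig3 g eta lam a b) * (X b - X (qr_star g eta lam a b)).

Lemma minmax0 s : Rmin 0 s + Rmax 0 s = s.
Proof. unfold Rmin, Rmax. destruct Rle_dec; lra. Qed.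

Lemma LRsum g eta lam X a b : Lsum g eta lam X a b + Rsum g eta lam X a b =
  Sig1 g eta lam a b * (X (ql_star g eta lam a b) - X a)
  + Sig2 g eta lam a b * (X (qr_star g eta lam a b) - X (ql_star g eta lam a b))
  + Sig3 g eta lam a b * (X b - X (qr_star g eta lam a b)).
Proof.
unfold Lsum, Rsum.
pose proof (minmax0 (Sig1 g eta lam a b)) as E1.
pose proof (minmax0 (Sig2 g eta lam a b)) as E2.
pose proof (minmax0 (Sig3 g eta lam a b)) as E3.
set (m1 := Rmin 0 (Sig1 g eta lam a b)) in *. set (M1 := Rmax 0 (Sig1 g eta lam a b)) in *.
set (m2 := Rmin 0 (Sig2 g eta lam a b)) in *. set (M2 := Rmax 0 (Sig2 g eta lam a b)) in *.
set (m3 := Rmin 0 (Sig3 g eta lam a b)) in *. set (M3 := Rmax 0 (Sig3 g eta lam a b)) in *.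
rewrite <- E1, <- E2, <- E3. ring.
Qed.

Lemma flux_wl_eq g eta lam w a b : flux_w_l g eta lam w a b = w a * vel a + Lsum g eta lam w a b.
Proof. unfold flux_w_l, Lsum; cbv zeta. ring. Qed.
Lemma flux_wr_eq g eta lam w a b : flux_w_r g eta lam w a b = w b * vel b - Rsum g eta lam w a b.
Proof. unfold flux_w_r, Rsum; cbv zeta. ring. Qed.

Lemma Rmin0_pos s : 0 <= s -> Rmin 0 s = 0.
Proof. intros; apply Rmin_left; lra. Qed.
Lemma Rmin0_neg s : s <= 0 -> Rmin 0 s = s.
Proof. intros; apply Rmin_right; lra. Qed.

Set Default Proof Using "All".
Section Pair.
Variables (g eta lam : R) (ql qr : state).
Hypotheses (Hg : 0 < g) (He : 0 < eta) (Hlam : 0 < lam) (Hql : admissible ql) (Hqr : admissible qr).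

Local Notation cl := (c_l g eta lam ql qr).
Local Notation cr := (c_r g eta lam ql qr).

Lemma pair_pos : 0 < cl /\ 0 < cr /\ 0 < inv_hl_star g eta lam ql qr /\ 0 < inv_hr_star g eta lam ql qr
  /\ 0 < hl_star g eta lam ql qr /\ 0 < hr_star g eta lam ql qr.
Proof.
destruct (part1_pair g eta lam ql qr Hg He Hlam Hql Hqr) as [A [B _]].
destruct (cl_pos g eta lam ql qr Hg He Hlam Hql Hqr) as [C1 C2].
destruct (sound_pos g eta lam ql Hg He Hlam Hql) as [S1 _].
destruct (sound_pos g eta lam qr Hg He Hlam Hqr) as [S2 _].
pose proof Hql as [Hhl _]. pose proof Hqr as [Hhr _].
unfold hl_star, hr_star.
repeat split; try nra; try assumption; apply Rinv_0_lt_compat; assumption.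
Qed.

Lemma ustar_l : u_star g eta lam ql qr = vel ql + cl*(/hl_star g eta lam ql qr - /st_h ql).
Proof.
destruct pair_pos as [P1 [P2 [P3 P4]]].
unfold hl_star. rewrite Rinv_inv. unfold u_star, inv_hl_star; cbv zeta.
destruct Hql as [Hhl _]. field. lra.
Qed.

Lemma ustar_r : u_star g eta lam ql qr = vel qr + (-cr)*(/hr_star g eta lam ql qr - /st_h qr).
Proof.
destruct pair_pos as [P1 [P2 [P3 P4]]].
unfold hr_star. rewrite Rinv_inv. unfold u_star, inv_hr_star; cbv zeta.
destruct Hqr as [Hhr _]. field. lra.
Qed.

Lemma pistar_l : pi_star g eta lam ql qr = pressure g eta lam ql - cl*(u_star g eta lam ql qr - vel ql).
Proof.
destruct pair_pos as [P1 [P2 _]].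
unfold pi_star, u_star; cbv zeta. field. lra.
Qed.

Lemma pistar_r : pi_star g eta lam ql qr = pressure g eta lam qr - (-cr)*(u_star g eta lam ql qr - vel qr).
Proof.
destruct pair_pos as [P1 [P2 _]].
unfold pi_star, u_star; cbv zeta. field. lra.
Qed.

Lemma sig_order : Sig1 g eta lam ql qr < Sig2 g eta lam ql qr < Sig3 g eta lam ql qr.
Proof.
destruct pair_pos as [P1 [P2 [P3 [P4 [P5 P6]]]]].
pose proof Hql as [Hhl _]. pose proof Hqr as [Hhr _].
unfold Sig1, Sig2, Sig3.
pose proof ustar_l as U1. pose proof ustar_r as U2.
assert (0 < cl * / hl_star g eta lam ql qr) by (apply Rmult_lt_0_compat; [lra| apply Rinv_0_lt_compat; lra]).
assert (0 < cr * / hr_star g eta lam ql qr) by (apply Rmult_lt_0_compat; [lra| apply Rinv_0_lt_compat; lra]).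
replace (cl / st_h ql) with (cl * / st_h ql) by reflexivity.
replace (cr / st_h qr) with (cr * / st_h qr) by reflexivity.
split; nra.
Qed.

Lemma qls_vel : vel (ql_star g eta lam ql qr) = u_star g eta lam ql qr.
Proof. destruct pair_pos as [_ [_ [_ [_ [P5 _]]]]]. unfold vel, ql_star; cbv zeta; cbn [st_h st_hu st_hsxx st_hszz]. field. lra. Qed.
Lemma qrs_vel : vel (qr_star g eta lam ql qr) = u_star g eta lam ql qr.
Proof. destruct pair_pos as [_ [_ [_ [_ [_ P6]]]]]. unfold vel, qr_star; cbv zeta; cbn [st_h st_hu st_hsxx st_hszz]. field. lra. Qed.

Lemma qls_adm : admissible (ql_star g eta lam ql qr).
Proof.
destruct pair_pos as [_ [_ [_ [_ [P5 _]]]]]. pose proof Hql as [Hh [Hx Hz]].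
unfold admissible, sigxx, sigzz, ql_star; cbv zeta; cbn [st_h st_hu st_hsxx st_hszz].
split; [lra|]. split.
- replace (hl_star g eta lam ql qr * (sigxx ql * (st_h ql / hl_star g eta lam ql qr) ^ 2) / hl_star g eta lam ql qr)
    with (sigxx ql * (st_h ql / hl_star g eta lam ql qr) ^ 2) by (field; lra).
  apply Rmult_lt_0_compat; [lra|]. apply pow_lt. apply Rdiv_lt_0_compat; lra.
- replace (hl_star g eta lam ql qr * (sigzz ql * (hl_star g eta lam ql qr / st_h ql) ^ 2) / hl_star g eta lam ql qr)
    with (sigzz ql * (hl_star g eta lam ql qr / st_h ql) ^ 2) by (field; lra).
  apply Rmult_lt_0_compat; [lra|]. apply pow_lt. apply Rdiv_lt_0_compat; lra.
Qed.

Lemma qrs_adm : admissible (qr_star g eta lam ql qr).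
Proof.
destruct pair_pos as [_ [_ [_ [_ [_ P5]]]]]. pose proof Hqr as [Hh [Hx Hz]].
unfold admissible, sigxx, sigzz, qr_star; cbv zeta; cbn [st_h st_hu st_hsxx st_hszz].
split; [lra|]. split.
- replace (hr_star g eta lam ql qr * (sigxx qr * (st_h qr / hr_star g eta lam ql qr) ^ 2) / hr_star g eta lam ql qr)
    with (sigxx qr * (st_h qr / hr_star g eta lam ql qr) ^ 2) by (field; lra).
  apply Rmult_lt_0_compat; [lra|]. apply pow_lt. apply Rdiv_lt_0_compat; lra.
- replace (hr_star g eta lam ql qr * (sigzz qr * (hr_star g eta lam ql qr / st_h qr) ^ 2) / hr_star g eta lam ql qr)
    with (sigzz qr * (hr_star g eta lam ql qr / st_h qr) ^ 2) by (field; lra).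
  apply Rmult_lt_0_compat; [lra|]. apply pow_lt. apply Rdiv_lt_0_compat; lra.
Qed.

Lemma qls_sig : sigxx (ql_star g eta lam ql qr) = sigxx ql * (st_h ql / hl_star g eta lam ql qr)^2
  /\ sigzz (ql_star g eta lam ql qr) = sigzz ql * (hl_star g eta lam ql qr / st_h ql)^2.
Proof.
destruct pair_pos as [_ [_ [_ [_ [P5 _]]]]].
unfold sigxx at 1, sigzz at 1, ql_star; cbv zeta; cbn [st_h st_hu st_hsxx st_hszz].
pose proof Hql as [Hh0 _]. split; field; lra.
Qed.
Lemma qrs_sig : sigxx (qr_star g eta lam ql qr) = sigxx qr * (st_h qr / hr_star g eta lam ql qr)^2
  /\ sigzz (qr_star g eta lam ql qr) = sigzz qr * (hr_star g eta lam ql qr / st_h qr)^2.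
Proof.
destruct pair_pos as [_ [_ [_ [_ [_ P5]]]]].
unfold sigxx at 1, sigzz at 1, qr_star; cbv zeta; cbn [st_h st_hu st_hsxx st_hszz].
pose proof Hqr as [Hh0 _]. split; field; lra.
Qed.

Lemma qls_energy : energy g eta lam (ql_star g eta lam ql qr) =
  Ef g eta lam (hl_star g eta lam ql qr) (u_star g eta lam ql qr)
     (sigxx ql * (st_h ql / hl_star g eta lam ql qr)^2) (sigzz ql * (hl_star g eta lam ql qr / st_h ql)^2).
Proof.
unfold energy. rewrite qls_vel. destruct qls_sig as [A B]. rewrite A, B. reflexivity.
Qed.

Lemma qrs_energy : energy g eta lam (qr_star g eta lam ql qr) =
  Ef g eta lam (hr_star g eta lam ql qr) (u_star g eta lam ql qr)
     (sigxx qr * (st_h qr / hr_star g eta lam ql qr)^2) (sigzz qr * (hr_star g eta lam ql qr / st_h qr)^2).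
Proof.
unfold energy. rewrite qrs_vel. destruct qrs_sig as [A B]. rewrite A, B. reflexivity.
Qed.


Local Notation hl := (st_h ql).
Local Notation hr := (st_h qr).
Local Notation hls := (hl_star g eta lam ql qr).
Local Notation hrs := (hr_star g eta lam ql qr).
Local Notation us := (u_star g eta lam ql qr).
Local Notation ps := (pi_star g eta lam ql qr).
Local Notation S1 := (Sig1 g eta lam ql qr).
Local Notation S2 := (Sig2 g eta lam ql qr).
Local Notation S3 := (Sig3 g eta lam ql qr).
Local Notation qls := (ql_star g eta lam ql qr).
Local Notation qrs := (qr_star g eta lam ql qr).

Lemma S3_eq : S3 = vel qr - (-cr)/hr.
Proof. unfold Sig3. unfold Rdiv. ring. Qed.

Lemma dissip : energy_flux g eta lam qr - energy_flux g eta lam ql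
  - (S1*(energy g eta lam qls - energy g eta lam ql) + S2*(energy g eta lam qrs - energy g eta lam qls)
     + S3*(energy g eta lam qr - energy g eta lam qrs)) <= 0.
Proof.
destruct pair_pos as [P1 [P2 [P3 [P4 [P5 P6]]]]].
pose proof Hql as [Hhl [Hxl Hzl]]. pose proof Hqr as [Hhr [Hxr Hzr]].
assert (Hk : 0 < eta/(2*lam)) by (unfold Rdiv; apply Rmult_lt_0_compat; [lra| apply Rinv_0_lt_compat; lra]).
pose proof (wave_energy g eta lam hl hls (vel ql) us cl (sigxx ql) (sigzz ql) (pressure g eta lam ql) ps S1
  ltac:(lra) Hhl P5 Hxl Hzl ustar_l eq_refl pistar_l eq_refl) as W1.
pose proof (wave_energy g eta lam hr hrs (vel qr) us (-cr) (sigxx qr) (sigzz qr) (pressure g eta lam qr) ps S3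
  ltac:(lra) Hhr P6 Hxr Hzr ustar_r eq_refl pistar_r S3_eq) as W3.
destruct (part1_pair g eta lam ql qr Hg He Hlam Hql Hqr) as [_ [_ [SL SR]]].
assert (BL : g*hl^2*hls + eta/(2*lam)*sigxx ql*hl^2 + eta/(2*lam)*sigzz ql*(hls+2*hl)*hls <= cl^2).
{ apply bracket_le; try lra.
  - rewrite <- H_eq by (auto; lra). apply SL. split; [apply Rmin_l | apply Rmax_l].
  - rewrite <- H_eq by (auto; lra). apply SL. split; [apply Rmin_r | apply Rmax_r]. }
assert (BR : g*hr^2*hrs + eta/(2*lam)*sigxx qr*hr^2 + eta/(2*lam)*sigzz qr*(hrs+2*hr)*hrs <= cr^2).
{ apply bracket_le; try lra.
  - rewrite <- H_eq by (auto; lra). apply SR. split; [apply Rmin_l | apply Rmax_l].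
  - rewrite <- H_eq by (auto; lra). apply SR. split; [apply Rmin_r | apply Rmax_r]. }
replace ((-cr)^2) with (cr^2) in W3 by ring.
assert (F1 : 0 <= (hls-hl)^2/(2*hl^2*hls^2)).
{ unfold Rdiv. apply Rmult_le_pos. apply pow2_ge_0. left; apply Rinv_0_lt_compat.
  apply Rmult_lt_0_compat; [|apply pow_lt; lra]. apply Rmult_lt_0_compat; [lra|apply pow_lt; lra]. }
assert (F3 : 0 <= (hrs-hr)^2/(2*hr^2*hrs^2)).
{ unfold Rdiv. apply Rmult_le_pos. apply pow2_ge_0. left; apply Rinv_0_lt_compat.
  apply Rmult_lt_0_compat; [|apply pow_lt; lra]. apply Rmult_lt_0_compat; [lra|apply pow_lt; lra]. }
replace (cl*(hls-hl)^2/(2*hl^2*hls^2)) with (cl*((hls-hl)^2/(2*hl^2*hls^2))) in W1 by (unfold Rdiv; ring).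
replace (-cr*(hrs-hr)^2/(2*hr^2*hrs^2)) with (-cr*((hrs-hr)^2/(2*hr^2*hrs^2))) in W3 by (unfold Rdiv; ring).
assert (D1 : cl*((hls-hl)^2/(2*hl^2*hls^2)) * (g*hl^2*hls + eta/(2*lam)*sigxx ql*hl^2 + eta/(2*lam)*sigzz ql*(hls+2*hl)*hls - cl^2) <= 0).
{ assert (0 <= cl*((hls-hl)^2/(2*hl^2*hls^2))) by (apply Rmult_le_pos; lra). nra. }
assert (D3 : 0 <= -cr*((hrs-hr)^2/(2*hr^2*hrs^2)) * (g*hr^2*hrs + eta/(2*lam)*sigxx qr*hr^2 + eta/(2*lam)*sigzz qr*(hrs+2*hr)*hrs - cr^2)).
{ assert (0 <= cr*((hrs-hr)^2/(2*hr^2*hrs^2))) by (apply Rmult_le_pos; lra). nra. }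
rewrite qls_energy, qrs_energy. unfold energy_flux. unfold Sig2.
change (energy g eta lam ql) with (Ef g eta lam hl (vel ql) (sigxx ql) (sigzz ql)) in *.
change (energy g eta lam qr) with (Ef g eta lam hr (vel qr) (sigxx qr) (sigzz qr)) in *.
lra.
Qed.

Lemma qls_comp : st_h qls = hls /\ st_hu qls = hls * us.
Proof. unfold ql_star; cbv zeta; cbn [st_h st_hu]. split; reflexivity. Qed.
Lemma qrs_comp : st_h qrs = hrs /\ st_hu qrs = hrs * us.
Proof. unfold qr_star; cbv zeta; cbn [st_h st_hu]. split; reflexivity. Qed.

Lemma RH_all :
  (hls*us - hl*vel ql = S1*(hls - hl) /\ (hls*us*us + ps) - (hl*vel ql*vel ql + pressure g eta lam ql) = S1*(hls*us - hl*vel ql))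
  /\ (hrs*us - hr*vel qr = S3*(hrs - hr) /\ (hrs*us*us + ps) - (hr*vel qr*vel qr + pressure g eta lam qr) = S3*(hrs*us - hr*vel qr)).
Proof.
destruct pair_pos as [P1 [P2 [P3 [P4 [P5 P6]]]]].
pose proof Hql as [Hhl _]. pose proof Hqr as [Hhr _].
split.
- apply (wave_RH hl hls (vel ql) us cl); auto. apply ustar_l. apply pistar_l.
- apply (wave_RH hr hrs (vel qr) us (-cr)); auto. apply ustar_r. apply pistar_r. apply S3_eq.
Qed.

Lemma flux_h_eq : flux_h g eta lam ql qr = st_hu ql + Lsum g eta lam st_h ql qr.
Proof.
destruct RH_all as [[M1 _] [M3 _]].
destruct qls_comp as [A1 A2]. destruct qrs_comp as [B1 B2].
destruct (adm_split ql Hql) as [Ul _].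
destruct sig_order as [O1 O2].
unfold flux_h, riemann, Lsum. rewrite A1, B1. unfold Sig2 in *.
destruct (Rlt_dec 0 S1) as [C1|C1]; cbn [fst].
- rewrite !Rmin0_pos by lra. ring.
- destruct (Rlt_dec 0 us) as [C2|C2]; cbn [fst].
  + rewrite A2, Rmin0_neg, !Rmin0_pos by lra. rewrite Ul. lra.
  + destruct (Rlt_dec 0 S3) as [C3|C3]; cbn [fst].
    * rewrite B2, (Rmin0_neg S1), (Rmin0_neg us), Rmin0_pos by lra. rewrite Ul. lra.
    * rewrite !Rmin0_neg by lra. rewrite Ul. destruct (adm_split qr Hqr) as [Ur _]. rewrite Ur. lra.
Qed.

Lemma flux_hu_eq : flux_hu g eta lam ql qr = st_hu ql * vel ql + pressure g eta lam ql + Lsum g eta lam st_hu ql qr.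
Proof.
destruct RH_all as [[_ M1] [_ M3]].
destruct qls_comp as [A1 A2]. destruct qrs_comp as [B1 B2].
destruct (adm_split ql Hql) as [Ul _].
destruct (adm_split qr Hqr) as [Ur _].
destruct sig_order as [O1 O2].
unfold flux_hu, riemann, Lsum. unfold Sig2 in *.
destruct (Rlt_dec 0 S1) as [C1|C1]; cbn [fst snd]; rewrite ?A2, ?B2, ?qls_vel, ?qrs_vel, ?Ul, ?Ur.
- rewrite !Rmin0_pos by lra. ring.
- destruct (Rlt_dec 0 us) as [C2|C2]; cbn [fst snd]; rewrite ?A2, ?B2, ?qls_vel, ?qrs_vel, ?Ul, ?Ur.
  + rewrite Rmin0_neg, !Rmin0_pos by lra. lra.
  + destruct (Rlt_dec 0 S3) as [C3|C3]; cbn [fst snd]; rewrite ?A2, ?B2, ?qls_vel, ?qrs_vel, ?Ul, ?Ur.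
    * rewrite (Rmin0_neg S1), (Rmin0_neg us), Rmin0_pos by lra. lra.
    * rewrite !Rmin0_neg by lra. lra.
Qed.

Lemma flux_h_eq_r : flux_h g eta lam ql qr = st_hu qr - Rsum g eta lam st_h ql qr.
Proof.
rewrite flux_h_eq. pose proof (LRsum g eta lam st_h ql qr) as L.
destruct RH_all as [[M1 _] [M3 _]].
destruct qls_comp as [A1 A2]. destruct qrs_comp as [B1 B2].
destruct (adm_split ql Hql) as [Ul _]. destruct (adm_split qr Hqr) as [Ur _].
rewrite A1, B1 in L. unfold Sig2 in L. rewrite Ul, Ur. lra.
Qed.

Lemma flux_hu_eq_r : flux_hu g eta lam ql qr = st_hu qr * vel qr + pressure g eta lam qr - Rsum g eta lam st_hu ql qr.
Proof.
rewrite flux_hu_eq. pose proof (LRsum g eta lam st_hu ql qr) as L.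
destruct RH_all as [[_ M1] [_ M3]].
destruct qls_comp as [A1 A2]. destruct qrs_comp as [B1 B2].
destruct (adm_split ql Hql) as [Ul _]. destruct (adm_split qr Hqr) as [Ur _].
rewrite A2, B2 in L. unfold Sig2 in L. rewrite Ul, Ur in *. lra.
Qed.

End Pair.

Definition wsum (l : list (R*state)) (X : state -> R) : R :=
  fold_right (fun p acc => fst p * X (snd p) + acc) 0 l.

Lemma wsum_tan l X A1 A2 A3 A4 c0 c1 c2 c3 c4 a1 a2 a3 a4 :
  wsum l (fun s => X s - (c0 + c1*(A1 s - a1) + c2*(A2 s - a2) + c3*(A3 s - a3) + c4*(A4 s - a4)))
  = wsum l X - (c0*wsum l (fun _ => 1) + c1*(wsum l A1 - a1*wsum l (fun _ => 1))
     + c2*(wsum l A2 - a2*wsum l (fun _ => 1)) + c3*(wsum l A3 - a3*wsum l (fun _ => 1))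
     + c4*(wsum l A4 - a4*wsum l (fun _ => 1))).
Proof. induction l as [|p l IH]; simpl. ring. rewrite IH. ring. Qed.

Lemma wsum_nonneg l X : (forall p, In p l -> 0 <= fst p /\ 0 <= X (snd p)) -> 0 <= wsum l X.
Proof.
induction l as [|p l IH]; simpl; intros H. lra.
destruct (H p (or_introl eq_refl)).
assert (0 <= wsum l X) by (apply IH; intros; apply H; auto).
assert (0 <= fst p * X (snd p)) by (apply Rmult_le_pos; auto). unfold wsum in *. lra.
Qed.

Lemma wsum_pos l X : (forall p, In p l -> 0 <= fst p /\ 0 < X (snd p)) -> 0 < wsum l (fun _ => 1) -> 0 < wsum l X.
Proof.
induction l as [|p l IH]; simpl; intros H H1. lra.
destruct (H p (or_introl eq_refl)) as [Hp1 Hp2].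
assert (0 <= wsum l X) by (apply wsum_nonneg; intros; split; [apply H; auto| left; apply H; auto]).
destruct Hp1 as [Hp1|Hp1].
- assert (0 < fst p * X (snd p)) by (apply Rmult_lt_0_compat; auto). unfold wsum in *. lra.
- rewrite <- Hp1 in *. assert (0 < wsum l X) by (apply IH; [intros; apply H; auto | unfold wsum in *; lra]).
  unfold wsum in *. lra.
Qed.

Lemma ln_le y : 0 < y -> ln y <= y - 1.
Proof. intros H. pose proof (exp_ineq1_le (ln y)). rewrite exp_ln in H0 by lra. lra. Qed.

Definition gradE g eta lam (p : state) :=
  (- vel p ^ 2 / 2 + g * st_h p - eta/(4*lam)*(ln (sigxx p) + ln (sigzz p)),
   vel p, eta/(4*lam)*(1 - / sigxx p), eta/(4*lam)*(1 - / sigzz p)).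

Lemma tangent g eta lam p s : 0 < g -> 0 < eta -> 0 < lam -> admissible p -> admissible s ->
  0 <= energy g eta lam s - (energy g eta lam p
     + (- vel p ^ 2 / 2 + g * st_h p - eta/(4*lam)*(ln (sigxx p) + ln (sigzz p)))*(st_h s - st_h p)
     + vel p * (st_hu s - st_hu p)
     + eta/(4*lam)*(1 - / sigxx p) * (st_hsxx s - st_hsxx p)
     + eta/(4*lam)*(1 - / sigzz p) * (st_hszz s - st_hszz p)).
Proof.
intros Hg He Hl Hp Hs.
destruct (adm_split p Hp) as [P1 [P2 P3]]. destruct (adm_split s Hs) as [S1 [S2 S3]].
rewrite P1, P2, P3, S1, S2, S3.
destruct Hp as [Hhp [Hxp Hzp]]. destruct Hs as [Hhs [Hxs Hzs]].
unfold energy. rewrite !ln_mult by lra.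
set (hp := st_h p) in *. set (hs := st_h s) in *. set (up := vel p) in *. set (us := vel s) in *.
set (xp := sigxx p) in *. set (xs := sigxx s) in *. set (zp := sigzz p) in *. set (zs := sigzz s) in *.
pose proof (ln_le (xs/xp) ltac:(apply Rdiv_lt_0_compat; lra)) as Lx.
pose proof (ln_le (zs/zp) ltac:(apply Rdiv_lt_0_compat; lra)) as Lz.
unfold Rdiv in Lx, Lz.
rewrite ln_mult, ln_Rinv in Lx by (try apply Rinv_0_lt_compat; lra).
rewrite ln_mult, ln_Rinv in Lz by (try apply Rinv_0_lt_compat; lra).
assert (K : 0 < eta/(4*lam)) by (unfold Rdiv; apply Rmult_lt_0_compat; [lra| apply Rinv_0_lt_compat; lra]).
set (k := eta/(4*lam)) in *.
assert (E : hs * us ^ 2 / 2 + g * hs ^ 2 / 2 + k * (hs * (xs + zs - (ln xs + ln zs) - 2)) -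
   (hp * up ^ 2 / 2 + g * hp ^ 2 / 2 + k * (hp * (xp + zp - (ln xp + ln zp) - 2)) +
    (- up ^ 2 / 2 + g * hp - k * (ln xp + ln zp)) * (hs - hp) + up * (hs * us - hp * up) +
    k * (1 - / xp) * (hs * xs - hp * xp) + k * (1 - / zp) * (hs * zs - hp * zp))
  = hs/2*(us-up)^2 + g/2*(hs-hp)^2 + k*hs*((xs/xp - 1 - (ln xs - ln xp)) + (zs/zp - 1 - (ln zs - ln zp)))).
{ field. lra. }
rewrite E.
assert (0 <= hs/2*(us-up)^2) by (apply Rmult_le_pos; [lra| apply pow2_ge_0]).
assert (0 <= g/2*(hs-hp)^2) by (apply Rmult_le_pos; [lra| apply pow2_ge_0]).
assert (0 <= k*hs*((xs/xp - 1 - (ln xs - ln xp)) + (zs/zp - 1 - (ln zs - ln zp)))).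
{ apply Rmult_le_pos; [apply Rmult_le_pos; lra| lra]. }
lra.
Qed.

Definition avg (l : list (R*state)) : state :=
  St (wsum l st_h) (wsum l st_hu) (wsum l st_hsxx) (wsum l st_hszz).

Lemma jensen g eta lam l : 0 < g -> 0 < eta -> 0 < lam ->
  (forall p, In p l -> 0 <= fst p /\ admissible (snd p)) -> wsum l (fun _ => 1) = 1 ->
  admissible (avg l) /\ energy g eta lam (avg l) <= wsum l (energy g eta lam).
Proof.
intros Hg He Hl Hw H1.
assert (Hh : 0 < wsum l st_h).
{ apply wsum_pos; [|lra]. intros p Hp. destruct (Hw p Hp) as [A [B _]]. auto. }
assert (Hx : 0 < wsum l st_hsxx).
{ apply wsum_pos; [|lra]. intros p Hp. destruct (Hw p Hp) as [A B]. split; auto.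
  destruct (adm_split _ B) as [_ [E _]]. rewrite E. destruct B as [B1 [B2 _]]. nra. }
assert (Hz : 0 < wsum l st_hszz).
{ apply wsum_pos; [|lra]. intros p Hp. destruct (Hw p Hp) as [A B]. split; auto.
  destruct (adm_split _ B) as [_ [_ E]]. rewrite E. destruct B as [B1 [_ B2]]. nra. }
assert (Ha : admissible (avg l)).
{ unfold admissible, avg, sigxx, sigzz; cbn [st_h st_hsxx st_hszz].
  split; [lra|split; apply Rdiv_lt_0_compat; lra]. }
split; [exact Ha|].
set (p := avg l).
assert (T : 0 <= wsum l (fun s => energy g eta lam s - (energy g eta lam p
     + (- vel p ^ 2 / 2 + g * st_h p - eta/(4*lam)*(ln (sigxx p) + ln (sigzz p)))*(st_h s - st_h p)
     + vel p * (st_hu s - st_hu p)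
     + eta/(4*lam)*(1 - / sigxx p) * (st_hsxx s - st_hsxx p)
     + eta/(4*lam)*(1 - / sigzz p) * (st_hszz s - st_hszz p)))).
{ apply wsum_nonneg. intros q Hq. destruct (Hw q Hq) as [A B]. split; auto. apply tangent; auto. }
rewrite wsum_tan in T. rewrite H1 in T.
assert (E1 : st_h p = wsum l st_h) by reflexivity.
assert (E2 : st_hu p = wsum l st_hu) by reflexivity.
assert (E3 : st_hsxx p = wsum l st_hsxx) by reflexivity.
assert (E4 : st_hszz p = wsum l st_hszz) by reflexivity.
rewrite <- E1, <- E2, <- E3, <- E4 in T.
lra.
Qed.

Definition Gnum g eta lam (a b : state) : R :=
  energy_flux g eta lam a + Lsum g eta lam (energy g eta lam) a b.

Lemma Gnum_diag g eta lam q : 0 < g -> 0 < eta -> 0 < lam -> admissible q ->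
  Gnum g eta lam q q = energy_flux g eta lam q.
Proof.
intros Hg He Hl Hq.
destruct (pair_pos g eta lam q q Hg He Hl Hq Hq) as [P1 [P2 _]].
pose proof Hq as [Hh [Hx Hz]].
assert (Ec : c_r g eta lam q q = c_l g eta lam q q) by reflexivity.
assert (Ei : inv_hl_star g eta lam q q = / st_h q).
{ unfold inv_hl_star; cbv zeta. unfold Rdiv.
  replace (c_r g eta lam q q * (vel q - vel q) + pressure g eta lam q - pressure g eta lam q) with 0 by ring.
  ring. }
assert (Ei2 : inv_hr_star g eta lam q q = / st_h q).
{ unfold inv_hr_star; cbv zeta. unfold Rdiv.
  replace (c_l g eta lam q q * (vel q - vel q) + pressure g eta lam q - pressure g eta lam q) with 0 by ring.
  ring. }
assert (Hs : hl_star g eta lam q q = st_h q) by (unfold hl_star; rewrite Ei; apply Rinv_inv).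
assert (Hs2 : hr_star g eta lam q q = st_h q) by (unfold hr_star; rewrite Ei2; apply Rinv_inv).
assert (Hu : u_star g eta lam q q = vel q).
{ unfold u_star; cbv zeta. rewrite Ec. field. lra. }
assert (EL : energy g eta lam (ql_star g eta lam q q) = energy g eta lam q).
{ rewrite qls_energy by auto. rewrite Hs, Hu.
  replace (st_h q / st_h q) with 1 by (field; lra). rewrite pow1, !Rmult_1_r. reflexivity. }
assert (ER : energy g eta lam (qr_star g eta lam q q) = energy g eta lam q).
{ rewrite qrs_energy by auto. rewrite Hs2, Hu.
  replace (st_h q / st_h q) with 1 by (field; lra). rewrite pow1, !Rmult_1_r. reflexivity. }
unfold Gnum, Lsum. rewrite EL, ER. ring.
Qed.

Lemma Rmin0_mono a b : a <= b -> Rmin 0 a <= Rmin 0 b.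
Proof. unfold Rmin; destruct Rle_dec; destruct Rle_dec; lra. Qed.
Lemma Rmax0_mono a b : a <= b -> Rmax 0 a <= Rmax 0 b.
Proof. unfold Rmax; destruct Rle_dec; destruct Rle_dec; lra. Qed.
Lemma Rmin0_bnd a : - Rabs a <= Rmin 0 a <= 0.
Proof. unfold Rmin, Rabs; destruct Rle_dec; destruct Rcase_abs; lra. Qed.
Lemma Rmax0_bnd a : 0 <= Rmax 0 a <= Rabs a.
Proof. unfold Rmax, Rabs; destruct Rle_dec; destruct Rcase_abs; lra. Qed.

Lemma speed_bnd g eta lam a b : Rabs (Sig1 g eta lam a b) <= max_speed g eta lam a b /\
  Rabs (Sig3 g eta lam a b) <= max_speed g eta lam a b.
Proof.
unfold max_speed. split. apply Rmax_l.
eapply Rle_trans; [|apply Rmax_r]. apply Rmax_r.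
Qed.

Lemma cell g eta lam dt dx qm q qp : 0 < g -> 0 < eta -> 0 < lam -> 0 < dt -> 0 < dx ->
  admissible qm -> admissible q -> admissible qp ->
  dt * max_speed g eta lam qm q <= /2 * dx -> dt * max_speed g eta lam q qp <= /2 * dx ->
  energy g eta lam (scheme_step g eta lam dt dx qm q qp) - energy g eta lam q
  + dt / dx * (Gnum g eta lam q qp - Gnum g eta lam qm q) <= 0.
Proof.
intros Hg He Hl Hdt Hdx Hqm Hq Hqp C1 C2.
set (lm := dt/dx).
assert (Hlm : 0 < lm) by (unfold lm; apply Rdiv_lt_0_compat; lra).
destruct (speed_bnd g eta lam qm q) as [B1 B3].
destruct (speed_bnd g eta lam q qp) as [A1 A3].
assert (K1 : lm * Rabs (Sig1 g eta lam q qp) <= /2).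
{ unfold lm. apply (Rmult_le_reg_r dx); [lra|]. replace (dt/dx*Rabs (Sig1 g eta lam q qp)*dx) with (dt*Rabs (Sig1 g eta lam q qp)) by (field; lra).
  assert (dt*Rabs (Sig1 g eta lam q qp) <= dt * max_speed g eta lam q qp) by (apply Rmult_le_compat_l; lra). lra. }
assert (K3 : lm * Rabs (Sig3 g eta lam qm q) <= /2).
{ unfold lm. apply (Rmult_le_reg_r dx); [lra|]. replace (dt/dx*Rabs (Sig3 g eta lam qm q)*dx) with (dt*Rabs (Sig3 g eta lam qm q)) by (field; lra).
  assert (dt*Rabs (Sig3 g eta lam qm q) <= dt * max_speed g eta lam qm q) by (apply Rmult_le_compat_l; lra). lra. }
destruct (sig_order g eta lam q qp Hg He Hl Hq Hqp) as [OR1 OR2].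
destruct (sig_order g eta lam qm q Hg He Hl Hqm Hq) as [OL1 OL2].
set (m1 := Rmin 0 (Sig1 g eta lam q qp)). set (m2 := Rmin 0 (Sig2 g eta lam q qp)). set (m3 := Rmin 0 (Sig3 g eta lam q qp)).
set (M1 := Rmax 0 (Sig1 g eta lam qm q)). set (M2 := Rmax 0 (Sig2 g eta lam qm q)). set (M3 := Rmax 0 (Sig3 g eta lam qm q)).
assert (W1 : m1 <= m2) by (apply Rmin0_mono; lra).
assert (W2 : m2 <= m3) by (apply Rmin0_mono; lra).
assert (W3 : M1 <= M2) by (apply Rmax0_mono; lra).
assert (W4 : M2 <= M3) by (apply Rmax0_mono; lra).
destruct (Rmin0_bnd (Sig1 g eta lam q qp)) as [W5 _]. fold m1 in W5.
destruct (Rmin0_bnd (Sig3 g eta lam q qp)) as [_ W6]. fold m3 in W6.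
destruct (Rmax0_bnd (Sig1 g eta lam qm q)) as [W7 _]. fold M1 in W7.
destruct (Rmax0_bnd (Sig3 g eta lam qm q)) as [_ W8]. fold M3 in W8.
set (l := [(/2 + lm*m1, q); (lm*(m2-m1), ql_star g eta lam q qp); (lm*(m3-m2), qr_star g eta lam q qp);
           (-(lm*m3), qp); (lm*M1, qm); (lm*(M2-M1), ql_star g eta lam qm q); (lm*(M3-M2), qr_star g eta lam qm q);
           (/2 - lm*M3, q)]).
assert (ID : forall X, wsum l X = X q - lm * Lsum g eta lam X q qp - lm * Rsum g eta lam X qm q).
{ intros X. unfold l, wsum, Lsum, Rsum; cbn [fold_right fst snd]. fold m1 m2 m3 M1 M2 M3. field. }
assert (Hw : forall p, In p l -> 0 <= fst p /\ admissible (snd p)).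
{ intros p Hp. unfold l in Hp. cbn [In] in Hp.
  assert (0 <= lm * (m2 - m1)) by (apply Rmult_le_pos; lra).
  assert (0 <= lm * (m3 - m2)) by (apply Rmult_le_pos; lra).
  assert (0 <= lm * (M2 - M1)) by (apply Rmult_le_pos; lra).
  assert (0 <= lm * (M3 - M2)) by (apply Rmult_le_pos; lra).
  assert (0 <= lm * M1) by (apply Rmult_le_pos; lra).
  assert (lm * m3 <= 0) by nra.
  assert (- (lm * Rabs (Sig1 g eta lam q qp)) <= lm * m1) by (rewrite Ropp_mult_distr_r; apply Rmult_le_compat_l; lra).
  assert (lm * M3 <= lm * Rabs (Sig3 g eta lam qm q)) by (apply Rmult_le_compat_l; lra).
  repeat (destruct Hp as [Hp|Hp]; [subst p; cbn [fst snd]; split; [lra|] |]); try contradiction;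
  first [assumption | apply qls_adm; assumption | apply qrs_adm; assumption]. }
assert (H1 : wsum l (fun _ => 1) = 1).
{ rewrite ID. unfold Lsum, Rsum. ring. }
destruct (jensen g eta lam l Hg He Hl Hw H1) as [_ J].
assert (SS : scheme_step g eta lam dt dx qm q qp = avg l).
{ unfold scheme_step, avg; cbv zeta. fold lm. unfold flux_l, flux_r; cbn [st_h st_hu st_hsxx st_hszz].
  rewrite !ID.
  rewrite (flux_h_eq g eta lam q qp), (flux_h_eq_r g eta lam qm q), (flux_hu_eq g eta lam q qp),
    (flux_hu_eq_r g eta lam qm q), !flux_wl_eq, !flux_wr_eq by assumption.
  f_equal; ring. }
rewrite SS. rewrite ID in J.
pose proof (dissip g eta lam qm q Hg He Hl Hqm Hq) as D.
pose proof (LRsum g eta lam (energy g eta lam) qm q) as L.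
fold lm. unfold Gnum.
set (A := energy_flux g eta lam q - Rsum g eta lam (energy g eta lam) qm q
          - (energy_flux g eta lam qm + Lsum g eta lam (energy g eta lam) qm q)).
assert (HA : A <= 0) by (unfold A; lra).
assert (lm * A <= 0) by nra.
unfold A in *. lra.
Qed.

Theorem lemma3 (g eta lam : R) :
  0 < g -> 0 < eta -> 0 < lam ->
  (forall ql qr : state, admissible ql -> admissible qr ->
     0 < inv_hl_star g eta lam ql qr /\ 0 < inv_hr_star g eta lam ql qr /\
     (forall h, Rmin (st_h ql) (hl_star g eta lam ql qr) <= h <=
                Rmax (st_h ql) (hl_star g eta lam ql qr) ->
        h ^ 2 * dPdh_s g eta lam h (s_xx ql) (s_zz ql) <= c_l g eta lam ql qr ^ 2) /\
     (forall h, Rmin (st_h qr) (hr_star g eta lam ql qr) <= h <=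
                Rmax (st_h qr) (hr_star g eta lam ql qr) ->
        h ^ 2 * dPdh_s g eta lam h (s_xx qr) (s_zz qr) <= c_r g eta lam ql qr ^ 2))
  /\
  (exists Gnum : state -> state -> R,
     (forall q : state, admissible q -> Gnum q q = energy_flux g eta lam q) /\
     forall (dx : Z -> R) (dt : R) (q : Z -> state),
       (forall i, 0 < dx i) -> 0 < dt ->
       (forall i, admissible (q i)) ->
       (forall i, dt * max_speed g eta lam (q i) (q (i + 1)%Z)
                  <= / 2 * Rmin (dx i) (dx (i + 1)%Z)) ->
       forall i : Z,
         energy g eta lam (scheme_step g eta lam dt (dx i) (q (i - 1)%Z) (q i) (q (i + 1)%Z))
         - energy g eta lam (q i)
         + dt / dx i * (Gnum (q i) (q (i + 1)%Z) - Gnum (q (i - 1)%Z) (q i)) <= 0).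
Proof.
intros Hg He Hl. split.
- intros ql qr Hql Hqr. apply part1_pair; assumption.
- exists (Gnum g eta lam). split.
  + intros q Hq. apply Gnum_diag; assumption.
  + intros dx dt q Hdx Hdt Hq Hc i.
    apply cell; auto.
    * pose proof (Hc (i - 1)%Z) as C. replace (i - 1 + 1)%Z with i in C by ring.
      pose proof (Rmin_r (dx (i-1)%Z) (dx i)). lra.
    * pose proof (Hc i) as C. pose proof (Rmin_l (dx i) (dx (i+1)%Z)). lra.
Qed.
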